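(* Let $W$ be a real symmetric non-negative $n\times n$ matrix with zero diagonal and $\beta\ge0$. If $I+\beta W$ is positive definite, then for every $z\in\mathbb{C}^n$ the function $x\mapsto D_{\beta,W}(x;z)$ has a unique minimizer over $\mathbb{C}^n$.
   Context: For $x\in\mathbb{C}^n$, $|x|$ denotes the vector of magnitudes, $\|x\|_1=\sum_i|x_i|$, $P_W(x)=\|x\|_1+\frac12\sum_{i,j}w_{i,j}|x_ix_j|=\|x\|_1+\frac12|x|^TW|x|$, and $D_{\beta,W}(x;z)=\frac12\|z-x\|_2^2+\beta P_W(x)$. *)

(* Defs.v *)
From Stdlib Require Import Reals.
From mathcomp Require Import all_boot.
Set Implicit Arguments. Unset Strict Implicit. Unset Printing Implicit Defensive.
Open Scope R_scope.

(* A complex number is represented by its (real part, imaginary part). *)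
Definition C := (R * R)%type.
Definition cmod (z : C) : R := sqrt (fst z ^ 2 + snd z ^ 2).
Definition csub (z w : C) : C := (fst z - fst w, snd z - snd w).

Definition cvec (n : nat) := 'I_n -> C.
Definition rmat (n : nat) := 'I_n -> 'I_n -> R.

Definition rsum (n : nat) (f : 'I_n -> R) : R := \big[Rplus/0]_(i < n) f i.

Definition norm1 (n : nat) (x : cvec n) : R := rsum (fun i => cmod (x i)).
Definition norm2sq (n : nat) (x : cvec n) : R := rsum (fun i => cmod (x i) ^ 2).

Definition PW (n : nat) (W : rmat n) (x : cvec n) : R :=
  norm1 x + / 2 * rsum (fun i => rsum (fun j => W i j * (cmod (x i) * cmod (x j)))).

Definition DbW (n : nat) (beta : R) (W : rmat n) (x z : cvec n) : R :=
  / 2 * norm2sq (fun i => csub (z i) (x i)) + beta * PW W x.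

Definition sym_mat (n : nat) (W : rmat n) : Prop := forall i j, W i j = W j i.
Definition nonneg_mat (n : nat) (W : rmat n) : Prop := forall i j, 0 <= W i j.
Definition zero_diag (n : nat) (W : rmat n) : Prop := forall i, W i i = 0.

Definition id_plus_scale (n : nat) (beta : R) (W : rmat n) : rmat n :=
  fun i j => (if i == j then 1 else 0) + beta * W i j.
Definition pos_def (n : nat) (M : rmat n) : Prop :=
  forall v : 'I_n -> R, (exists i, v i <> 0) ->
    0 < rsum (fun i => rsum (fun j => v i * M i j * v j)).

(* Main.v *)
Require Import Defs.
From HB Require Import structures.
From Stdlib Require Import Reals Lra Psatz Classical FunctionalExtensionality.
From mathcomp Require Import all_boot all_order all_algebra.
From mathcomp Require Import all_classical all_reals all_analysis.
From mathcomp Require Import Rstruct Rstruct_topology.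
Set Implicit Arguments. Unset Strict Implicit. Unset Printing Implicit Defensive.
Import Order.TTheory GRing.Theory Num.Theory.
Import numFieldNormedType.Exports.

Module S.
Local Open Scope classical_set_scope.
Local Open Scope ring_scope.
Import ArrowAsProduct.
Lemma box_min (R : realType) (n : nat) (f : ('I_n -> R) -> R) (M : R) :
  0 <= M -> continuous f ->
  exists r : 'I_n -> R, (forall i, 0 <= r i <= M) /\
    forall s : 'I_n -> R, (forall i, 0 <= s i <= M) -> f r <= f s.
Proof.
move=> M0 cf.
have cK : compact [set g : 'I_n -> R | forall i, `[0, M]%classic (g i)].
  by apply: (@tychonoff _ (fun _ : 'I_n => R) (fun _ => `[0, M]%classic)) => i; exact: segment_compact.
have ne : [set g : 'I_n -> R | forall i, `[0, M]%classic (g i)] !=set0.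
  by exists (fun _ => 0) => i /=; rewrite in_itv /= lexx M0.
have [c cin cmin] := compact_EVT_min ne cK (continuous_subspaceT cf).
exists c; split.
  by move=> i; move: cin; rewrite inE => /(_ i); rewrite /= in_itv.
move=> s hs; apply: cmin; rewrite inE => i /=; rewrite in_itv; exact: hs.
Qed.

Lemma cD (R : realType) (T : topologicalType) (f g : T -> R) :
  continuous f -> continuous g -> continuous (fun x => f x + g x).
Proof. by move=> cf cg x; exact: (continuousD (cf x) (cg x)). Qed.
Lemma cM (R : realType) (T : topologicalType) (f g : T -> R) :
  continuous f -> continuous g -> continuous (fun x => f x * g x).
Proof. by move=> cf cg x; exact: (continuousM (cf x) (cg x)). Qed.
Lemma cB (R : realType) (T : topologicalType) (f g : T -> R) :
  continuous f -> continuous g -> continuous (fun x => f x - g x).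
Proof. by move=> cf cg x; exact: (continuousB (cf x) (cg x)). Qed.
Lemma cC (R : realType) (T : topologicalType) (c : R) :
  continuous (fun _ : T => c).
Proof. exact: cst_continuous. Qed.

Lemma cS (R : realType) (T : topologicalType) (n : nat) (F : 'I_n -> T -> R) :
  (forall i, continuous (F i)) -> continuous (fun x => \sum_(i < n) F i x).
Proof.
move=> cF; apply: (@continuous_big R 'I_n +%R 0 xpredT _ T (index_enum _) F) => //.
exact: add_continuous.
Qed.

Lemma G_cont (R : realType) (n : nat) (a : 'I_n -> R) (h b : R) (W : 'I_n -> 'I_n -> R) :
  continuous (fun r : 'I_n -> R => h * \sum_(i < n) ((a i - r i) * (a i - r i)) +
     b * (\sum_(i < n) r i + h * \sum_(i < n) \sum_(j < n) (W i j * (r i * r j)))).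
Proof.
have pc : forall i : 'I_n, continuous (fun r : 'I_n -> R => r i).
  move=> i; exact: (@proj_continuous _ (fun _ => R) i).
have addc : continuous (fun x : R * R => x.1 + x.2) by exact: add_continuous.
apply: cD.
  apply: cM; first exact: cC.
  refine (@cS R _ n (fun i (r : 'I_n -> R) => (a i - r i) * (a i - r i)) _) => i.
  by apply: cM; apply: cB; (exact: cC || exact: pc).
apply: cM; first exact: cC.
apply: cD.
  by refine (@cS R _ n (fun i (r : 'I_n -> R) => r i) _) => i; exact: pc.
apply: cM; first exact: cC.
refine (@cS R _ n (fun i (r : 'I_n -> R) => \sum_(j < n) (W i j * (r i * r j))) _) => i.
refine (@cS R _ n (fun j (r : 'I_n -> R) => (W i j * (r i * r j))) _) => j.
apply: cM; first exact: cC.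
by apply: cM; exact: pc.
Qed.
End S.

Open Scope R_scope.

Section RS.
Variable n : nat.
Implicit Types f g h : 'I_n -> R.

Lemma rsum_ext f g : (forall i, f i = g i) -> rsum f = rsum g.
Proof. by move=> H; apply: eq_bigr => i _; apply: H. Qed.

Lemma rsum_lin a b f g : rsum (fun i => a * f i + b * g i) = a * rsum f + b * rsum g.
Proof.
rewrite /rsum; apply: (big_rec3 (fun y1 y2 y3 => y1 = a * y2 + b * y3)).
  ring.
by move=> i y1 y2 y3 _ ->; ring.
Qed.

Lemma rsum_scal a f : rsum (fun i => a * f i) = a * rsum f.
Proof.
rewrite /rsum; apply: (big_rec2 (fun y1 y2 => y1 = a * y2)); first ring.
by move=> i y1 y2 _ ->; ring.
Qed.

Lemma rsum_add f g : rsum (fun i => f i + g i) = rsum f + rsum g.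
Proof.
rewrite -[rsum f]Rmult_1_l -[rsum g]Rmult_1_l -rsum_lin.
by apply: rsum_ext => i; ring.
Qed.

Lemma rsum_ge0 f : (forall i, 0 <= f i) -> 0 <= rsum f.
Proof.
move=> H; rewrite /rsum; apply: (big_ind (fun x => 0 <= x)); first lra.
  by move=> x y; lra.
by move=> i _; apply: H.
Qed.

Lemma rsum_le f g : (forall i, f i <= g i) -> rsum f <= rsum g.
Proof.
move=> H; rewrite /rsum; apply: (big_ind2 (fun x y => x <= y)); first lra.
  by move=> x1 x2 y1 y2; lra.
by move=> i _; apply: H.
Qed.

Lemma rsum_split f k : rsum f = f k + \big[Rplus/0]_(i < n | i != k) f i.
Proof. by rewrite /rsum (bigD1 k). Qed.

Lemma rsum_lt f g k : (forall i, f i <= g i) -> f k < g k -> rsum f < rsum g.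
Proof.
move=> H Hk; rewrite (rsum_split f k) (rsum_split g k).
have : \big[Rplus/0]_(i < n | i != k) f i <= \big[Rplus/0]_(i < n | i != k) g i.
  apply: (big_ind2 (fun x y => x <= y)); first lra.
    by move=> x1 x2 y1 y2; lra.
  by move=> i _; apply: H.
lra.
Qed.

Lemma rsum_term f k : (forall i, 0 <= f i) -> f k <= rsum f.
Proof.
move=> H; rewrite (rsum_split f k).
have : 0 <= \big[Rplus/0]_(i < n | i != k) f i.
  apply: (big_ind (fun x => 0 <= x)); first lra.
    by move=> x y; lra.
  by move=> i _; apply: H.
lra.
Qed.

Lemma rsum_delta (k : 'I_n) (c : 'I_n -> R) :
  rsum (fun j => if k == j then c j else 0) = c k.
Proof.
rewrite (rsum_split _ k) eqxx big1; first ring.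
by move=> i /negbTE; rewrite eq_sym => ->.
Qed.
End RS.

Lemma rsum_comb n (f g h : 'I_n -> R) :
  rsum (fun i => f i + g i - 2 * h i) = rsum f + rsum g - 2 * rsum h.
Proof.
have -> : rsum (fun i => f i + g i - 2 * h i) = rsum (fun i => 1 * (f i + g i) + (-2) * h i).
  by apply: rsum_ext => i; ring.
by rewrite rsum_lin rsum_add; ring.
Qed.

Lemma rsum_zero n (f : 'I_n -> R) : (forall i, f i = 0) -> rsum f = 0.
Proof.
move=> H; have -> : rsum f = rsum (fun i => 0 * f i) by apply: rsum_ext => i; rewrite H; ring.
rewrite rsum_scal; ring.
Qed.

Lemma cmod_ge0 w : 0 <= cmod w.
Proof. exact: sqrt_pos. Qed.

Lemma cmod_sq w : cmod w * cmod w = fst w ^ 2 + snd w ^ 2.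
Proof. rewrite /cmod sqrt_sqrt //; nra. Qed.

Definition unitv (w : R * R) : R * R :=
  if Req_EM_T (cmod w) 0 then (1, 0) else (fst w / cmod w, snd w / cmod w).
Definition scl (r : R) (u : R * R) : R * R := (r * fst u, r * snd u).

Lemma unitv_norm w : fst (unitv w) ^ 2 + snd (unitv w) ^ 2 = 1.
Proof.
rewrite /unitv; case: Req_EM_T => [_|H] /=; first ring.
have Hs := cmod_sq w; move: H Hs; move: (cmod w) => c Hc Hs.
have -> : (fst w / c) ^ 2 + (snd w / c) ^ 2 = (fst w ^ 2 + snd w ^ 2) / (c * c) by field.
rewrite -Hs; field; exact: Hc.
Qed.

Lemma unitv_dec w : w = scl (cmod w) (unitv w).
Proof.
rewrite /scl /unitv; case: Req_EM_T => [H|H] /=.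
  have := cmod_sq w; rewrite H; case: w H => x y /= _ Hs.
  have hx : x = 0 by nra.
  have hy : y = 0 by nra.
  by rewrite hx hy; f_equal; ring.
case: w H => x y /= H; f_equal; field; exact: H.
Qed.

Lemma cmod_scl r u : fst u ^ 2 + snd u ^ 2 = 1 -> 0 <= r -> cmod (scl r u) = r.
Proof.
move=> Hu Hr; rewrite /cmod /scl /=.
have -> : (r * fst u) ^ 2 + (r * snd u) ^ 2 = r ^ 2 by rewrite -[r ^ 2]Rmult_1_r -Hu; ring.
rewrite -Rsqr_pow2; exact: sqrt_Rsqr.
Qed.

Lemma cmod_scl_sq r u : fst u ^ 2 + snd u ^ 2 = 1 -> cmod (scl r u) ^ 2 = r * r.
Proof.
move=> Hu; rewrite /cmod /scl; cbn [fst snd]; rewrite pow2_sqrt; last nra.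
rewrite -[r * r]Rmult_1_r -Hu; ring.
Qed.

Lemma csub_X w r : cmod (csub w (scl r (unitv w))) ^ 2 = (cmod w - r) * (cmod w - r).
Proof.
have -> : csub w (scl r (unitv w)) = scl (cmod w - r) (unitv w).
  rewrite {1}(unitv_dec w) /csub /scl /=; f_equal; ring.
exact: cmod_scl_sq (unitv_norm w).
Qed.

Lemma csub_sq w x : cmod (csub w x) ^ 2 = (fst w - fst x) ^ 2 + (snd w - snd x) ^ 2.
Proof. rewrite /cmod /csub; cbn [fst snd]; apply: pow2_sqrt; apply: Rplus_le_le_0_compat; apply: pow2_ge_0. Qed.

Lemma csub_ge w x : (cmod w - cmod x) * (cmod w - cmod x) <= cmod (csub w x) ^ 2.
Proof.
have h1 := cmod_sq w; have h2 := cmod_sq x.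
have g1 := cmod_ge0 w; have g2 := cmod_ge0 x.
rewrite csub_sq.
move: (cmod w) (cmod x) h1 h2 g1 g2 => a c.
case: w => w1 w2; case: x => x1 x2; cbn [fst snd] => h1 h2 g1 g2.
have lag : (w1 * x1 + w2 * x2) ^ 2 + (w1 * x2 - w2 * x1) ^ 2 = (a * c) ^ 2.
  have -> : (a * c) ^ 2 = (a * a) * (c * c) by ring.
  rewrite h1 h2; ring.
have : w1 * x1 + w2 * x2 <= a * c.
  case: (Rle_or_lt (w1 * x1 + w2 * x2) (a * c)) => // hlt.
  have hac : 0 <= a * c by apply: Rmult_le_pos.
  set p := w1 * x1 + w2 * x2 in hlt lag *.
  have hp : (a * c) ^ 2 < p ^ 2 by simpl; nra.
  have := pow2_ge_0 (w1 * x2 - w2 * x1); lra.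
move=> hp.
have e : (w1 - x1) ^ 2 + (w2 - x2) ^ 2 = a * a + c * c - 2 * (w1 * x1 + w2 * x2).
  rewrite h1 h2; ring.
rewrite e; nra.
Qed.

Lemma csub_eq w x : cmod (csub w x) ^ 2 = (cmod w - cmod x) * (cmod w - cmod x) ->
  cmod w <> 0 -> x = scl (cmod x) (unitv w).
Proof.
move=> E Hw.
have h1 := cmod_sq w; have h2 := cmod_sq x.
rewrite /scl /unitv; case: Req_EM_T => [//|_] /=.
move: E; rewrite csub_sq.
move: (cmod w) (cmod x) h1 h2 Hw => a c.
case: w => w1 w2; case: x => x1 x2; cbn [fst snd] => h1 h2 Hw E.
have ep : w1 * x1 + w2 * x2 = a * c.
  have : (w1 - x1) ^ 2 + (w2 - x2) ^ 2 = a * a + c * c - 2 * (w1 * x1 + w2 * x2)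
    by rewrite h1 h2; ring.
  lra.
have e1 : (a * x1 - c * w1) ^ 2 + (a * x2 - c * w2) ^ 2 = 0.
  have -> : (a * x1 - c * w1) ^ 2 + (a * x2 - c * w2) ^ 2 =
     a * a * (x1 ^ 2 + x2 ^ 2) + c * c * (w1 ^ 2 + w2 ^ 2) - 2 * a * c * (w1 * x1 + w2 * x2) by ring.
  rewrite -h1 -h2 ep; ring.
have s1 := pow2_ge_0 (a * x1 - c * w1).
have s2 := pow2_ge_0 (a * x2 - c * w2).
have q1 : a * x1 - c * w1 = 0.
  apply: Rsqr_0_uniq; rewrite Rsqr_pow2; lra.
have q2 : a * x2 - c * w2 = 0.
  apply: Rsqr_0_uniq; rewrite Rsqr_pow2; lra.
f_equal.
  transitivity ((a * x1) / a); first by field.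
  rewrite (_ : a * x1 = c * w1); [by field | lra].
transitivity ((a * x2) / a); first by field.
rewrite (_ : a * x2 = c * w2); [by field | lra].
Qed.

Lemma cmod0 x : cmod x = 0 -> x = scl 0 (1, 0).
Proof.
move=> H; have := cmod_sq x; rewrite H; case: x {H} => x1 x2 /= h.
rewrite /scl /=; f_equal; nra.
Qed.

Definition Gs n (a : 'I_n -> R) (beta : R) (W : rmat n) (r : 'I_n -> R) : R :=
  / 2 * rsum (fun i => (a i - r i) * (a i - r i)) +
  beta * (rsum r + / 2 * rsum (fun i => rsum (fun j => W i j * (r i * r j)))).

Definition Xv n (z : cvec n) (r : 'I_n -> R) : cvec n := fun i => scl (r i) (unitv (z i)).

Lemma D_ge_G n beta (W : rmat n) (x z : cvec n) :
  Gs (fun i => cmod (z i)) beta W (fun i => cmod (x i)) <= DbW beta W x z.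
Proof.
rewrite /Gs /DbW /PW /norm1 /norm2sq.
have := @rsum_le n (fun i => (cmod (z i) - cmod (x i)) * (cmod (z i) - cmod (x i)))
   (fun i => cmod (csub (z i) (x i)) ^ 2) (fun i => csub_ge (z i) (x i)).
lra.
Qed.

Lemma D_eq_G n beta (W : rmat n) (r : 'I_n -> R) (z : cvec n) :
  (forall i, 0 <= r i) -> DbW beta W (Xv z r) z = Gs (fun i => cmod (z i)) beta W r.
Proof.
move=> Hr.
have Hc : forall i, cmod (Xv z r i) = r i.
  by move=> i; apply: cmod_scl => //; apply: unitv_norm.
rewrite /Gs /DbW /PW /norm1 /norm2sq.
rewrite (rsum_ext (f := fun i => cmod (csub (z i) (Xv z r i)) ^ 2)
   (g := fun i => (cmod (z i) - r i) * (cmod (z i) - r i)));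
  last by move=> i; apply: csub_X.
rewrite (rsum_ext (f := fun i => cmod (Xv z r i)) (g := r)) //.
rewrite (rsum_ext (f := fun i => rsum (fun j => W i j * (cmod (Xv z r i) * cmod (Xv z r j))))
   (g := fun i => rsum (fun j => W i j * (r i * r j)))) //.
by move=> i; apply: rsum_ext => j; rewrite !Hc.
Qed.

Definition Qf n beta (W : rmat n) (d : 'I_n -> R) :=
  rsum (fun i => rsum (fun j => d i * id_plus_scale beta W i j * d j)).

Lemma alg_id A1 A2 A3 B1 B2 B3 C1 C2 C3 D E b :
  A1 + A2 - 2 * A3 = / 2 * D -> B1 + B2 - 2 * B3 = 0 -> C1 + C2 - 2 * C3 = / 2 * E ->
  / 2 * A1 + b * (B1 + / 2 * C1) + (/ 2 * A2 + b * (B2 + / 2 * C2)) -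
  2 * (/ 2 * A3 + b * (B3 + / 2 * C3)) = / 4 * (D + b * E).
Proof.
move=> h1 h2 h3.
have -> : A3 = (A1 + A2 - / 2 * D) / 2 by lra.
have -> : B3 = (B1 + B2) / 2 by lra.
have -> : C3 = (C1 + C2 - / 2 * E) / 2 by lra.
field.
Qed.

Lemma defect n (a : 'I_n -> R) beta (W : rmat n) (c r : 'I_n -> R) :
  Gs a beta W c + Gs a beta W r - 2 * Gs a beta W (fun i => (c i + r i) / 2) =
  / 4 * Qf beta W (fun i => c i - r i).
Proof.
set m := fun i => (c i + r i) / 2.
set d := fun i => c i - r i.
have E1 : rsum (fun i => (a i - c i) * (a i - c i)) + rsum (fun i => (a i - r i) * (a i - r i))
   - 2 * rsum (fun i => (a i - m i) * (a i - m i)) = / 2 * rsum (fun i => d i * d i).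
  rewrite -rsum_comb -rsum_scal; apply: rsum_ext => i; rewrite /m /d; field.
have E2 : rsum c + rsum r - 2 * rsum m = 0.
  rewrite -rsum_comb; apply: rsum_zero => i; rewrite /m; field.
have E3 : rsum (fun i => rsum (fun j => W i j * (c i * c j))) +
          rsum (fun i => rsum (fun j => W i j * (r i * r j))) -
      2 * rsum (fun i => rsum (fun j => W i j * (m i * m j))) =
      / 2 * rsum (fun i => rsum (fun j => W i j * (d i * d j))).
  rewrite -rsum_comb -rsum_scal; apply: rsum_ext => i.
  rewrite -rsum_comb -rsum_scal; apply: rsum_ext => j; rewrite /m /d; field.
have E4 : Qf beta W d = rsum (fun i => d i * d i) +
     beta * rsum (fun i => rsum (fun j => W i j * (d i * d j))).
  rewrite /Qf -rsum_scal -rsum_add; apply: rsum_ext => i.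
  rewrite (rsum_ext (g := fun j => (if i == j then d i * d j else 0) +
                                   beta * (W i j * (d i * d j)))); last first.
    by move=> j; rewrite /id_plus_scale; case: (i == j); ring.
  by rewrite rsum_add rsum_delta rsum_scal.
rewrite E4 /Gs.
exact: alg_id.
Qed.

Lemma box_exists n (a : 'I_n -> R) beta (W : rmat n) (M : R) : 0 <= M ->
  exists r : 'I_n -> R, (forall i, 0 <= r i /\ r i <= M) /\
    forall s, (forall i, 0 <= s i /\ s i <= M) -> Gs a beta W r <= Gs a beta W s.
Proof.
move=> HM.
have cf := @S.G_cont R n a (/ 2) beta W.
have [r [Hr Hm]] := @S.box_min R n (Gs a beta W) M ltac:(by apply/Rstruct.RleP) cf.
exists r; split.
  move=> i; have /andP[h1 h2] := Hr i; split; exact/Rstruct.RleP.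
move=> s Hs; apply/Rstruct.RleP; apply: Hm => i.
have [h1 h2] := Hs i; apply/andP; split; exact/Rstruct.RleP.
Qed.

Lemma Gs_parts_ge0 n beta (W : rmat n) (s : 'I_n -> R) :
  0 <= beta -> (forall i j, 0 <= W i j) -> (forall i, 0 <= s i) ->
  0 <= beta * (rsum s + / 2 * rsum (fun i => rsum (fun j => W i j * (s i * s j)))).
Proof.
move=> Hb HW Hs; apply: Rmult_le_pos => //.
have h1 := rsum_ge0 Hs.
have h2 : 0 <= rsum (fun i => rsum (fun j => W i j * (s i * s j))).
  apply: rsum_ge0 => i; apply: rsum_ge0 => j.
  apply: Rmult_le_pos => //; apply: Rmult_le_pos; exact: Hs.
lra.
Qed.

Lemma orthant_min n (a : 'I_n -> R) beta (W : rmat n) :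
  0 <= beta -> (forall i j, 0 <= W i j) -> (forall i, 0 <= a i) ->
  exists r : 'I_n -> R, (forall i, 0 <= r i) /\
    forall s, (forall i, 0 <= s i) -> Gs a beta W r <= Gs a beta W s.
Proof.
move=> Hb HW Ha.
set S := rsum a.
have HS : 0 <= S by apply: rsum_ge0.
have [r [Hr Hmin]] := @box_exists n a beta W (2 * S + 1) ltac:(lra).
exists r; split; first by move=> i; case: (Hr i).
move=> s Hs.
case: (Classical_Prop.classic (forall i, s i <= 2 * S + 1)) => Hbox.
  by apply: Hmin => i; split.
have [k Hk] := not_all_ex_not _ _ Hbox.
have Hk' : 2 * S + 1 < s k by lra.
have H0 : Gs a beta W r <= Gs a beta W (fun _ => 0).
  by apply: Hmin => i; lra.
have E0 : Gs a beta W (fun _ => 0) = / 2 * rsum (fun i => a i * a i).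
  rewrite /Gs (rsum_zero (f := fun _ : 'I_n => 0)) //.
  rewrite (rsum_zero (f := fun i => rsum (fun j => W i j * (0 * 0)))); last first.
    by move=> i; apply: rsum_zero => j; ring.
  rewrite (rsum_ext (f := fun i => (a i - 0) * (a i - 0)) (g := fun i => a i * a i)) //.
    ring.
  by move=> i; ring.
have Haa : rsum (fun i => a i * a i) <= S * S.
  rewrite -rsum_scal; apply: rsum_le => i.
  have := @rsum_term n a i Ha; rewrite -/S => h.
  have := Ha i; nra.
have Hak : a k <= S by apply: rsum_term.
have Hsk : (a k - s k) * (a k - s k) <= rsum (fun i => (a i - s i) * (a i - s i)).
  by apply: (@rsum_term n (fun i => (a i - s i) * (a i - s i)) k) => i; exact: Rle_0_sqr.
have Hbig : S * S < (a k - s k) * (a k - s k) by have := Ha k; nra.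
have Hp := Gs_parts_ge0 Hb HW Hs.
rewrite /Gs in H0 E0 *.
lra.
Qed.

Lemma D_eq_terms n beta (W : rmat n) (x z : cvec n) :
  DbW beta W x z <= Gs (fun i => cmod (z i)) beta W (fun i => cmod (x i)) ->
  forall i, cmod (csub (z i) (x i)) ^ 2 = (cmod (z i) - cmod (x i)) * (cmod (z i) - cmod (x i)).
Proof.
move=> H i.
have E : rsum (fun i => cmod (csub (z i) (x i)) ^ 2) <=
         rsum (fun i => (cmod (z i) - cmod (x i)) * (cmod (z i) - cmod (x i))).
  move: H; rewrite /Gs /DbW /PW /norm1 /norm2sq; lra.
have Hle := csub_ge (z i) (x i).
case: (Req_dec (cmod (csub (z i) (x i)) ^ 2)
   ((cmod (z i) - cmod (x i)) * (cmod (z i) - cmod (x i)))) => // hne.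
have : rsum (fun i => (cmod (z i) - cmod (x i)) * (cmod (z i) - cmod (x i))) <
       rsum (fun i => cmod (csub (z i) (x i)) ^ 2).
  apply: (rsum_lt (k := i)); first by move=> j; apply: csub_ge.
  lra.
lra.
Qed.

Lemma zero_coord n (a : 'I_n -> R) beta (W : rmat n) (r : 'I_n -> R) :
  0 <= beta -> (forall i j, 0 <= W i j) -> (forall i, 0 <= r i) ->
  (forall s, (forall i, 0 <= s i) -> Gs a beta W r <= Gs a beta W s) ->
  forall k, a k = 0 -> r k = 0.
Proof.
move=> Hb HW Hr Hmin k Hak.
apply: NNPP => hne.
have Hpos : 0 < r k by have := Hr k; lra.
pose s := fun j => if j == k then 0 else r j.
have Hs0 : forall j, 0 <= s j by move=> j; rewrite /s; case: (j == k) => //; lra.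
have Hsr : forall j, s j <= r j by move=> j; rewrite /s; case: (j == k) => //; have := Hr j; lra.
have H1 : rsum (fun i => (a i - s i) * (a i - s i)) < rsum (fun i => (a i - r i) * (a i - r i)).
  apply: (rsum_lt (k := k)).
    move=> j; rewrite /s; case: (j =P k) => [->|_]; last lra.
    rewrite Hak; nra.
  by rewrite /s eqxx Hak; nra.
have H2 : rsum s <= rsum r by apply: rsum_le.
have H3 : rsum (fun i => rsum (fun j => W i j * (s i * s j))) <=
          rsum (fun i => rsum (fun j => W i j * (r i * r j))).
  apply: rsum_le => i; apply: rsum_le => j.
  apply: Rmult_le_compat_l => //.
  apply: Rmult_le_compat => //.
have H4 : beta * (rsum s + / 2 * rsum (fun i => rsum (fun j => W i j * (s i * s j)))) <=
          beta * (rsum r + / 2 * rsum (fun i => rsum (fun j => W i j * (r i * r j)))).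
  apply: Rmult_le_compat_l => //; lra.
have := Hmin s Hs0; rewrite /Gs; lra.
Qed.

Lemma c_eq_r n (a : 'I_n -> R) beta (W : rmat n) (c r : 'I_n -> R) :
  pos_def (id_plus_scale beta W) ->
  (forall i, 0 <= r i) -> (forall i, 0 <= c i) ->
  (forall s, (forall i, 0 <= s i) -> Gs a beta W r <= Gs a beta W s) ->
  Gs a beta W c <= Gs a beta W r -> forall i, c i = r i.
Proof.
move=> Hpd Hr Hc Hmin Hcr i; apply: NNPP => hne.
have Hq : 0 < Qf beta W (fun i => c i - r i).
  apply: Hpd; exists i; lra.
have Hd := defect a beta W c r.
have Hm : Gs a beta W r <= Gs a beta W (fun i => (c i + r i) / 2).
  by apply: Hmin => j; have := Hr j; have := Hc j; lra.
lra.
Qed.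

Lemma scl0 u : scl 0 u = (0, 0).
Proof. rewrite /scl; f_equal; ring. Qed.

Theorem proposition3 (n : nat) (W : rmat n) (beta : R)
  (HWsym : sym_mat W) (HWnn : nonneg_mat W) (HWdiag : zero_diag W)
  (Hbeta : 0 <= beta) (Hpd : pos_def (id_plus_scale beta W)) (z : cvec n) :
  exists! x : cvec n, forall y : cvec n, DbW beta W x z <= DbW beta W y z.
Proof.
have Ha : forall i, 0 <= cmod (z i) by move=> i; apply: cmod_ge0.
have [r0 [Hr0 Hmin]] := orthant_min Hbeta HWnn Ha.
have Hopt : forall y, DbW beta W (Xv z r0) z <= DbW beta W y z.
  move=> y; rewrite D_eq_G //; apply: Rle_trans (D_ge_G beta W y z).
  by apply: Hmin => i; apply: cmod_ge0.
exists (Xv z r0); split; first exact: Hopt.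
move=> x Hx.
have HG1 := D_ge_G beta W x z.
have HG2 := Hx (Xv z r0).
have HG3 := D_eq_G beta W z Hr0.
have HG4 := Hmin (fun i => cmod (x i)) (fun i => cmod_ge0 (x i)).
have Hterm := @D_eq_terms n beta W x z ltac:(lra).
have Hcr := @c_eq_r n (fun i => cmod (z i)) beta W (fun i => cmod (x i)) r0 Hpd Hr0
   (fun i => cmod_ge0 (x i)) Hmin ltac:(lra).
have Hzc := zero_coord Hbeta HWnn Hr0 Hmin.
apply: functional_extensionality => i.
rewrite /Xv.
case: (Req_dec (cmod (z i)) 0) => Hzi.
  have h0 := Hzc i Hzi.
  have hx : cmod (x i) = 0 by rewrite (Hcr i) h0.
  by rewrite (cmod0 hx) h0 !scl0.
rewrite (csub_eq (Hterm i) Hzi).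
by rewrite (Hcr i).
Qed.
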